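(* The following system $\mathsf{Q}$ is sound for $\mathcal{Q}(\mathrm{FO})$ and $\mathcal{Q}(\mathrm{QBF})$ (with lax semantics), writing $\varphi\Leftrightarrow\psi$ for $(\varphi\Rightarrow\psi)$ and $(\psi\Rightarrow\varphi)$ combined by the team-level conjunction: (Lin$\forall$) $\forall x\sim\varphi\Leftrightarrow\sim\forall x\varphi$; (F$\exists$) $\exists x\alpha\Leftrightarrow\neg\forall x\neg\alpha$ for classical $\alpha$; (D$\exists\otimes$) $\exists x(\varphi\otimes\psi)\Leftrightarrow\exists x\varphi\otimes\exists x\psi$; (E$\forall$) $\forall x\alpha\Rightarrow\, !x\,\alpha$ for classical $\alpha$; (I$\forall$) $!x\,\psi\Rightarrow\forall x\psi$; (Dis$\forall$) $\forall x(\varphi\Rightarrow\psi)\Rightarrow(\forall x\varphi\Rightarrow\forall x\psi)$; (Dis$!$) $!x(\varphi\Rightarrow\psi)\Rightarrow(!x\varphi\Rightarrow\, !x\psi)$; and the rule: from a theorem $\varphi$ infer $!x\,\varphi$.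
   Context: $\Rightarrow$ is the team-semantic material implication ($A\models\varphi\Rightarrow\psi$ iff $A\not\models\varphi$ or $A\models\psi$), $\sim$ the strong negation, $\otimes$ the splitting disjunction ($\varphi\otimes\psi := \sim(\varphi\multimap\sim\psi)$, i.e. the team splits as $S\cup U$ with $S\models\varphi$, $U\models\psi$). $\mathcal{Q}(\mathcal{L})$ is the closure of $\mathcal{L}$ under $\sim$, $\Rightarrow$, $\multimap$ and team quantifiers $\forall x$, $!x$ (shriek), with $\exists x\varphi:=\sim !x\sim\varphi$. For a structure $\mathcal{A}$ with domain $A$ and team $T$: $(\mathcal{A},T)\models\forall x\varphi$ iff the duplicating team $T[A/x]=\{s^x_a\mid s\in T,a\in A\}$ satisfies $\varphi$; $(\mathcal{A},T)\models\, !x\varphi$ iff $T[f/x]=\{s^x_a\mid s\in T,a\in f(s)\}$ satisfies $\varphi$ for every supplementing function $f:T\to\mathfrak{P}(A)\setminus\{\emptyset\}$ (lax semantics). For $\mathcal{Q}(\mathrm{QBF})$ the domain is $\{0,1\}$. *)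

(* Defs.v *)
From Stdlib Require Import List PeanoNat.
Import ListNotations.

Set Implicit Arguments.

Inductive QF (C : Type) : Type :=
| Cl     : C -> QF C
| Neg    : QF C -> QF C              (* strong negation ~ *)
| Imp    : QF C -> QF C -> QF C
| Lolli  : QF C -> QF C -> QF C
| All    : nat -> QF C -> QF C
| Shriek : nat -> QF C -> QF C.

Arguments Cl {C} _.
Arguments Neg {C} _.
Arguments Imp {C} _ _.
Arguments Lolli {C} _ _.
Arguments All {C} _ _.
Arguments Shriek {C} _ _.

Definition Ex {C} (x : nat) (p : QF C) : QF C := Neg (Shriek x (Neg p)).
Definition Tensor {C} (p q : QF C) : QF C := Neg (Lolli p (Neg q)).
Definition Conj {C} (p q : QF C) : QF C := Neg (Imp p (Neg q)).
Definition Iff {C} (p q : QF C) : QF C := Conj (Imp p q) (Imp q p).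

(* assignments are total maps from variables (nat) to the domain;
   a team is an arbitrary set of assignments *)
Definition upd {A : Type} (s : nat -> A) (x : nat) (a : A) : nat -> A :=
  fun y => if Nat.eqb y x then a else s y.

Section TeamSem.
Variables (A C : Type) (csat : C -> (nat -> A) -> Prop).

Fixpoint tsat (p : QF C) : ((nat -> A) -> Prop) -> Prop :=
  match p with
  | Cl a => fun T => forall s, T s -> csat a s        (* flatness *)
  | Neg q => fun T => ~ tsat q T
  | Imp q r => fun T => tsat q T -> tsat r T
  | Lolli q r => fun T =>
      forall S U : (nat -> A) -> Prop,
        (forall s, T s <-> S s \/ U s) -> tsat q S -> tsat r U
  | All x q => fun T =>
      tsat q (fun s' => exists s a, T s /\ s' = upd s x a)
  | Shriek x q => fun T =>
      forall f : (nat -> A) -> A -> Prop,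
        (forall s, T s -> exists a, f s a) ->
        tsat q (fun s' => exists s a, T s /\ f s a /\ s' = upd s x a)
  end.

Definition tvalid (p : QF C) : Prop := forall T, tsat p T.
End TeamSem.

Inductive QAxiom {C : Type} (cneg : C -> C) (cforall : nat -> C -> C) : QF C -> Prop :=
| Ax_LinAll : forall x p, QAxiom cneg cforall (Iff (All x (Neg p)) (Neg (All x p)))
| Ax_FEx : forall x a,
    QAxiom cneg cforall (Iff (Ex x (Cl a)) (Cl (cneg (cforall x (cneg a)))))
| Ax_DExTensor : forall x p q,
    QAxiom cneg cforall (Iff (Ex x (Tensor p q)) (Tensor (Ex x p) (Ex x q)))
| Ax_EAll : forall x a, QAxiom cneg cforall (Imp (All x (Cl a)) (Shriek x (Cl a)))
| Ax_IAll : forall x q, QAxiom cneg cforall (Imp (Shriek x q) (All x q))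
| Ax_DisAll : forall x p q,
    QAxiom cneg cforall (Imp (All x (Imp p q)) (Imp (All x p) (All x q)))
| Ax_DisShriek : forall x p q,
    QAxiom cneg cforall (Imp (Shriek x (Imp p q)) (Imp (Shriek x p) (Shriek x q))).

Record signature := { rsym : Type; fsym : Type }.

Inductive term (F : Type) : Type :=
| TVar : nat -> term F
| TApp : F -> list (term F) -> term F.
Arguments TVar {F} _.
Arguments TApp {F} _ _.

Inductive fo (S : signature) : Type :=
| FEq  : term (fsym S) -> term (fsym S) -> fo S
| FRel : rsym S -> list (term (fsym S)) -> fo S
| FNot : fo S -> fo S
| FAnd : fo S -> fo S -> fo S
| FAll : nat -> fo S -> fo S.
Arguments FEq {S} _ _.
Arguments FRel {S} _ _.
Arguments FAnd {S} _ _.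
Arguments FNot {S} _.
Arguments FAll {S} _ _.

(* a structure: nonempty domain, relations and functions interpreted on
   argument lists (any arity) *)
Record structure (S : signature) := {
  dom : Type;
  dom_inh : inhabited dom;
  rint : rsym S -> list dom -> Prop;
  fint : fsym S -> list dom -> dom }.

Section FOsem.
Variables (S : signature) (M : structure S).

Fixpoint teval (s : nat -> dom M) (t : term (fsym S)) : dom M :=
  match t with
  | TVar n => s n
  | TApp f ts => fint M f (map (teval s) ts)
  end.

Fixpoint fosat (a : fo S) (s : nat -> dom M) : Prop :=
  match a with
  | FEq t u => teval s t = teval s u
  | FRel r ts => rint M r (map (teval s) ts)
  | FNot b => ~ fosat b s
  | FAnd b c => fosat b s /\ fosat c s
  | FAll x b => forall d : dom M, fosat b (upd s x d)
  end.
End FOsem.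

Inductive qbf : Type :=
| QVar : nat -> qbf
| QNot : qbf -> qbf
| QAnd : qbf -> qbf -> qbf
| QAll : nat -> qbf -> qbf.

Fixpoint qbfsat (a : qbf) (s : nat -> bool) : Prop :=
  match a with
  | QVar n => s n = true
  | QNot b => ~ qbfsat b s
  | QAnd b c => qbfsat b s /\ qbfsat c s
  | QAll x b => forall d : bool, qbfsat b (upd s x d)
  end.

Definition FOvalid (S : signature) (p : QF (fo S)) : Prop :=
  forall M : structure S, tvalid (@fosat S M) p.

Definition QBFvalid (p : QF qbf) : Prop := tvalid qbfsat p.

(* Main.v *)
Require Import Defs.
From Stdlib Require Import Classical FunctionalExtensionality PropExtensionality.

Section Gen.
Variables (A C : Type) (csat : C -> (nat -> A) -> Prop) (a0 : A)
  (cneg : C -> C) (cforall : nat -> C -> C).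
Hypothesis Hneg : forall a s, csat (cneg a) s <-> ~ csat a s.
Hypothesis Hall : forall x a s, csat (cforall x a) s <-> forall d, csat a (upd s x d).

Lemma teq (T T' : (nat -> A) -> Prop) : (forall s, T s <-> T' s) -> T = T'.
Proof. intro H; apply functional_extensionality; intro s;
  apply propositional_extensionality; auto. Qed.

Lemma iff_ok p q T : (tsat csat p T -> tsat csat q T) -> (tsat csat q T -> tsat csat p T) ->
  tsat csat (Iff p q) T.
Proof. simpl; tauto. Qed.

Lemma gen_ax p : QAxiom cneg cforall p -> tvalid csat p.
Proof.
  intros H T; destruct H.
  - apply iff_ok; simpl; tauto.
  - apply iff_ok; simpl.
    + intros H1. intros s Ts. apply Hneg. intro H2.
      apply H1. intros f Hf Hc. destruct (Hf s Ts) as [d Hd].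
      pose proof (proj1 (Hall x (cneg a) s) H2 d) as H3. apply Hneg in H3. apply H3, Hc.
      exists s, d; auto.
    + intros H1 H2. apply (H2 (fun s d => csat a (upd s x d))).
      * intros s Ts. specialize (H1 s Ts). apply Hneg in H1.
        apply NNPP; intro N; apply H1; apply Hall; intro d; apply Hneg;
        intro c; apply N; eauto.
      * intros s' [s [d [Ts [c ->]]]]. exact c.
  - apply iff_ok; simpl.
    + intros H1 H2. apply H1. intros f Hf H3. apply H3.
      intros S' U' Hcov HS HU.
      apply H2 with (S := fun s => T s /\ exists a, f s a /\ S' (upd s x a))
                    (U := fun s => T s /\ exists a, f s a /\ U' (upd s x a)).
      * intros s; split.
        -- intros Ts. destruct (Hf s Ts) as [d Hd].
           assert (Hc : S' (upd s x d) \/ U' (upd s x d)).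
           { apply Hcov. exists s, d; auto. }
           destruct Hc; [left|right]; eauto.
        -- intros [[? _]|[? _]]; auto.
      * intro N. apply (N (fun s a => f s a /\ S' (upd s x a))).
        -- intros s [_ [d Hd]]; eauto.
        -- replace (fun s' => exists s a, (T s /\ exists a0, f s a0 /\ S' (upd s x a0))
              /\ (f s a /\ S' (upd s x a)) /\ s' = upd s x a) with S'; auto.
           apply teq; intro s'; split.
           ++ intro Hs. assert (Hs2 : exists s a, T s /\ f s a /\ s' = upd s x a)
                by (apply Hcov; auto).
              destruct Hs2 as [s [d [Ts [fd ->]]]]. exists s, d; repeat split; eauto.
           ++ intros [s [d [_ [[_ Hd] ->]]]]; auto.
      * intro N. apply (N (fun s a => f s a /\ U' (upd s x a))).
        -- intros s [_ [d Hd]]; eauto.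
        -- replace (fun s' => exists s a, (T s /\ exists a0, f s a0 /\ U' (upd s x a0))
              /\ (f s a /\ U' (upd s x a)) /\ s' = upd s x a) with U'; auto.
           apply teq; intro s'; split.
           ++ intro Hs. assert (Hs2 : exists s a, T s /\ f s a /\ s' = upd s x a)
                by (apply Hcov; auto).
              destruct Hs2 as [s [d [Ts [fd ->]]]]. exists s, d; repeat split; eauto.
           ++ intros [s [d [_ [[_ Hd] ->]]]]; auto.
    + intros H1 H2. apply H1. intros S U Hcov HS HU.
      apply HS; intros f1 Hf1 P1. apply HU; intros f2 Hf2 P2.
      apply (H2 (fun s a => (S s /\ f1 s a) \/ (U s /\ f2 s a))).
      * intros s Ts. apply Hcov in Ts. destruct Ts as [Ss|Us].
        -- destruct (Hf1 s Ss) as [d ?]; eauto.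
        -- destruct (Hf2 s Us) as [d ?]; eauto.
      * intro L. eapply L; [|exact P1|exact P2].
        intro s'; split.
        -- intros [s [d [Ts [[[Ss f]|[Us f]] ->]]]]; [left|right]; eauto.
        -- intros [[s [d [Ss [f ->]]]]|[s [d [Us [f ->]]]]]; exists s, d;
             (split; [apply Hcov; auto|]); eauto.
  - simpl; intros H1 f Hf s' [s [d [Ts [_ ->]]]]. apply H1; eauto.
  - simpl; intros H1. specialize (H1 (fun _ _ => True)).
    assert (E : (fun s' => exists s a, T s /\ True /\ s' = upd s x a) =
                (fun s' => exists s a, T s /\ s' = upd s x a)).
    { apply teq; intro s'; split; intros [s [d H]]; exists s, d; tauto. }
    rewrite <- E; apply H1; intros; exists a0; auto.
  - simpl; auto.
  - simpl; intros H1 H2 f Hf; apply H1; auto.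
Qed.
End Gen.

Theorem mainTheorem9 :
  (forall S : signature,
     (forall p : QF (fo S), QAxiom (@FNot S) (@FAll S) p -> FOvalid p) /\
     (forall (x : nat) (p : QF (fo S)), FOvalid p -> FOvalid (Shriek x p)))
  /\
  ((forall p : QF qbf, QAxiom QNot QAll p -> QBFvalid p) /\
   (forall (x : nat) (p : QF qbf), QBFvalid p -> QBFvalid (Shriek x p))).
Proof.
  split; [intro S; split|split].
  - intros p H M. destruct (dom_inh M) as [d].
    eapply gen_ax with (cneg := @FNot S) (cforall := @FAll S); eauto;
      simpl; tauto.
  - intros x p H M T f Hf; apply H.
  - intros p H. eapply gen_ax with (cneg := QNot) (cforall := QAll); eauto;
      [exact true| |]; simpl; tauto.
  - intros x p H T f Hf; apply H.
Qed.
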